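(* Let $r>1$, $q\in(0,1)$ and $p=1-q$. Then: (i) for all integers $k\ge1$, $\displaystyle\sum_{j=1}^{\infty}\frac{(r+k)\cdots(r+j+k-1)}{k(k+1)\cdots(j+k-1)}q^j\le p^{-(r+1)}-1$; (ii) for all integers $k\ge1$, $\displaystyle\sum_{j=1}^{\infty}\frac{(r+k)\cdots(r+j+k-1)}{(k+1)\cdots(j+k)}q^j\le\frac{p^{-r}-1}{rq}-1$; (iii) for all integers $k\ge1$, $\displaystyle\sum_{j=2}^{\infty}\frac{(r+k+1)\cdots(r+j+k-1)}{(k+1)\cdots(j+k-1)}q^j\le\frac{p^{-(r+1)}-1}{r}-q$; (iv) for all integers $k\ge2$, $\displaystyle\sum_{j=1}^{\infty}\frac{(r+k+1)\cdots(r+j+k)}{k(k+1)\cdots(j+k-1)}q^j\le\frac{p^{-(r+2)}-1}{(r+1)q}-1$; (v) for all integers $k\ge2$, $\displaystyle\sum_{j=1}^{\infty}\frac{(r+k)\cdots(r+j+k-1)}{k(k+1)\cdots(j+k)}q^j\le\frac{p^{-r}-1}{r(r+1)q^2}-\frac12$.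
   Context: In each product $(a)\cdots(b)$ the factors increase by $1$ from $a$ to $b$; e.g. $(r+k)\cdots(r+j+k-1)$ has $j$ factors and $k(k+1)\cdots(j+k-1)$ has $j$ factors. *)

(* Defs.v *)
From mathcomp Require Import all_boot all_order all_algebra.
From mathcomp Require Import all_classical all_reals all_analysis.
Set Implicit Arguments. Unset Strict Implicit. Unset Printing Implicit Defensive.
Import Order.TTheory GRing.Theory Num.Theory.
Local Open Scope ring_scope.

Definition rprod {R : ringType} (x : R) (m : nat) : R :=
  \prod_(i < m) (x + i%:R).

(* Main.v *)
Require Import Defs.
From mathcomp Require Import all_boot all_order all_algebra.
From mathcomp Require Import all_classical all_reals all_analysis.
From mathcomp Require Import ring lra.
Import Order.TTheory GRing.Theory Num.Theory.
Local Open Scope ring_scope.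

Section S.
Context {R : realType}.

Lemma rprodS (s : R) m : rprod s m.+1 = s * rprod (s + 1) m.
Proof.
rewrite /rprod big_ord_recl /= addr0; congr (_ * _).
by apply: eq_bigr => i _; rewrite /bump /= add1n -natr1; ring.
Qed.

Lemma rprodSr (s : R) m : rprod s m.+1 = rprod s m * (s + m%:R).
Proof. by rewrite /rprod big_ord_recr. Qed.

Lemma rprod_gt0 (a : R) m : 0 < a -> 0 < rprod a m.
Proof.
move=> a0; rewrite /rprod; apply: prodr_gt0 => i _.
by apply: (lt_le_trans a0); rewrite lerDl.
Qed.

Lemma rprod0 (a : R) : rprod a 0 = 1.
Proof. by rewrite /rprod big_ord0. Qed.

Definition T (s a x : R) (N : nat) := \sum_(m < N) rprod s m / rprod a m * x ^+ m.

Lemma TS (s a x : R) N : 0 < a ->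
  T s a x N.+1 = 1 + s / a * x * T (s + 1) (a + 1) x N.
Proof.
move=> a0; rewrite /T big_ord_recl /= !rprod0 divr1 mul1r; congr (_ + _).
rewrite mulr_sumr; apply: eq_bigr => i _.
rewrite /bump /= !rprodS exprS.
have h : 0 < rprod (a + 1) i by apply: rprod_gt0; rewrite ltr_wpDr.
by rewrite invfM; ring.
Qed.

Lemma mono (r a b : R) j : 0 <= r -> 0 < a -> a <= b ->
  rprod (r + b) j / rprod b j <= rprod (r + a) j / rprod a j.
Proof.
move=> r0 a0 ab; rewrite /rprod -!prodf_div; apply: ler_prod => i _.
have ai : 0 < a + i%:R by rewrite ltr_wpDr.
have bi : 0 < b + i%:R by rewrite (lt_le_trans ai) // lerD2r.
apply/andP; split; first by apply: divr_ge0; [rewrite -addrA; apply: addr_ge0 => //|]; apply: ltW.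
rewrite ler_pdivrMr // mulrAC ler_pdivlMr //.
have : r * (a + i%:R) <= r * (b + i%:R) by rewrite ler_wpM2l // lerD2r.
move=> h; rewrite -!addrA; nra.
Qed.


Lemma mon_deriv (c t : R) n :
  is_derive t 1 (fun x : R => c * x ^+ n.+1) (c * (n.+1%:R * t ^+ n)).
Proof.
have h := is_deriveX n.+1 (is_derive_id t (1:R)).
have h2 := is_deriveZ c h.
have -> : (fun x : R => c * x ^+ n.+1) = c \*: ((fun x : R => x) ^+ n.+1).
  by apply/funext => x; rewrite /= exprfctE.
set d := (X in is_derive _ _ _ X) in h2.
suff -> : c * (n.+1%:R * t ^+ n) = d by exact: h2.
by rewrite /d /GRing.scale /= mulr1.
Qed.

Lemma T_deriv (s t : R) N :
  is_derive t 1 (fun x => T s 1 x N.+1) (s * T (s + 1) 1 t N).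
Proof.
elim: N => [|N IH].
  have -> : (fun x => T s 1 x 1) = cst 1.
    by apply/funext => x; rewrite /T big_ord1 !rprod0 divr1 mul1r expr0.
  rewrite /T big_ord0 mulr0; exact: is_derive_cst.
have -> : (fun x => T s 1 x N.+2) =
   (fun x => T s 1 x N.+1) + (fun x => rprod s N.+1 / rprod 1 N.+1 * x ^+ N.+1).
  by apply/funext => x; rewrite /T big_ord_recr.
apply: is_derive_eq.
  exact: is_deriveD IH (mon_deriv _ _ _).
rewrite /T big_ord_recr /= mulrDr; congr (_ + _).
rewrite rprodS rprodSr.
have h : 0 < rprod 1 N :> R by apply: rprod_gt0.
rewrite -natr1 addrC invfM; field; rewrite gt_eqF ?h // gt_eqF // ltr_wpDr.

Qed.

Lemma T0 (s a : R) N : T s a 0 N.+1 = 1.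
Proof.
rewrite /T big_ord_recl !rprod0 divr1 mul1r expr0 big1 ?addr0 // => i _.
by rewrite expr0n /= mulr0.
Qed.

Lemma lin_deriv (y : R) : is_derive y 1 (fun y : R => 1 - y) (-1).
Proof.
have -> : (fun y : R => 1 - y) = cst 1 - id by apply/funext.
have := is_deriveB (is_derive_cst (1:R) y (1:R)) (is_derive_id y (1:R)).
by rewrite sub0r.
Qed.

Lemma key N : forall (s x : R), 0 < s -> 0 <= x -> x < 1 -> T s 1 x N <= (1 - x) `^ (-s).
Proof.
elim: N => [|N IH] s x s0 x0 x1.
  by rewrite /T big_ord0 powR_ge0.
pose g : R -> R := ((@powR R)^~(-s) \o (fun y : R => 1 - y)) - (fun y => T s 1 y N.+1).
pose dg := fun y : R => s * (1 - y) `^ (-s - 1) - s * T (s + 1) 1 y N.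
have Dg : forall y : R, y < 1 -> is_derive y 1 g (dg y).
  move=> y y1; apply: is_deriveB; last exact: T_deriv.
  have y0 : 0 < 1 - y by rewrite subr_gt0.
  have h := @is_derive1_comp R ((@powR R)^~(-s)) (fun y : R => 1 - y) y _ _ (is_derive1_powR (-s) y0) (lin_deriv y).
  apply: is_derive_eq.
  by rewrite mulrN1 mulNr opprK.
have [c cI E] : exists2 c, c \in `[0, x] & g x - g 0 = dg c * (x - 0).
  apply: MVT_segment => //.
    move=> y; rewrite in_itv /= => /andP[_ yx]; apply: Dg; exact: lt_trans yx x1.
  apply: derivable_within_continuous => y; rewrite in_itv /= => /andP[_ yx].
  apply: ex_derive; apply: Dg; exact: le_lt_trans yx x1.
move: cI; rewrite in_itv /= => /andP[c0 cx].
have g0 : g 0 = 0.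
  by rewrite /g !fctE /= subr0 T0 powR1 subrr.
move: E; rewrite g0 subr0 subr0 => E.
have : 0 <= g x.
  rewrite E; apply: mulr_ge0 => //.
  rewrite /dg -mulrBr; apply: mulr_ge0; first exact: ltW.
  rewrite subr_ge0 -opprD; apply: IH => //; first exact: ltr_wpDr.
  exact: le_lt_trans cx x1.
by rewrite /g /= subr_ge0.
Qed.

Lemma Tsplit (s a x : R) N :
  T s a x N.+1 = 1 + \sum_(j < N) rprod s j.+1 / rprod a j.+1 * x ^+ j.+1.
Proof. by rewrite /T big_ord_recl !rprod0 divr1 mul1r expr0. Qed.

Lemma T_ge0 (s a x : R) N : 0 < s -> 0 < a -> 0 <= x -> 0 <= T s a x N.
Proof.
move=> s0 a0 x0; rewrite /T; apply: sumr_ge0 => i _.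
by rewrite mulr_ge0 ?exprn_ge0 // divr_ge0 // ltW // rprod_gt0.
Qed.

Lemma term_ge0 (s a x : R) i j l : 0 < s -> 0 < a -> 0 <= x ->
  0 <= rprod s i / rprod a j * x ^+ l.
Proof.
move=> s0 a0 x0; apply: mulr_ge0; last exact: exprn_ge0.
by apply: divr_ge0; apply: ltW; apply: rprod_gt0.
Qed.

Lemma eser_le (m : nat) (f : nat -> R) (B : R) : (forall j, 0 <= f j) ->
  (forall n, \sum_(j < n) f (j + m)%N <= B) ->
  (\sum_(m <= j <oo) (f j)%:E <= B%:E)%E.
Proof.
move=> f0 fB; apply: lime_le.
  by apply: is_cvg_nneseries => n _ _; rewrite lee_fin.
apply: nearW => n; rewrite sumEFin lee_fin.
have [nm|mn] := leqP n m.
  by rewrite big_geq // (le_trans _ (fB 0%N)) // big_ord0.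
by rewrite -{1}[m]add0n big_addn big_mkord.
Qed.
End S.


Theorem lemmaA2 (R : realType) (r q p : R)
  (hr : 1 < r) (hq0 : 0 < q) (hq1 : q < 1) (hp : p = 1 - q) :
  (forall k : nat, (1 <= k)%N ->
     (\sum_(1 <= j <oo)
        ((rprod (r + k%:R) j / rprod (k%:R : R) j * q ^+ j)%:E))%E
     <= (p `^ (- (r + 1)) - 1)%:E)%E
  /\
  (forall k : nat, (1 <= k)%N ->
     (\sum_(1 <= j <oo)
        ((rprod (r + k%:R) j / rprod (k.+1%:R : R) j * q ^+ j)%:E))%E
     <= ((p `^ (- r) - 1) / (r * q) - 1)%:E)%E
  /\
  (forall k : nat, (1 <= k)%N ->
     (\sum_(2 <= j <oo)
        ((rprod (r + k.+1%:R) j.-1 / rprod (k.+1%:R : R) j.-1 * q ^+ j)%:E))%E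
     <= ((p `^ (- (r + 1)) - 1) / r - q)%:E)%E
  /\
  (forall k : nat, (2 <= k)%N ->
     (\sum_(1 <= j <oo)
        ((rprod (r + k.+1%:R) j / rprod (k%:R : R) j * q ^+ j)%:E))%E
     <= ((p `^ (- (r + 2)) - 1) / ((r + 1) * q) - 1)%:E)%E
  /\
  (forall k : nat, (2 <= k)%N ->
     (\sum_(1 <= j <oo)
        ((rprod (r + k%:R) j / rprod (k%:R : R) j.+1 * q ^+ j)%:E))%E
     <= ((p `^ (- r) - 1) / (r * (r + 1) * q ^+ 2) - 2^-1)%:E)%E.
Proof.
Proof.
subst p.
have r0 : 0 < r by apply: lt_trans hr.
have P1 : 0 <= 1 - q by rewrite subr_ge0 ltW.
split.
  move=> k k1; apply: eser_le => [j|n].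
    by apply: term_ge0; rewrite ?ltW // ?ltr_wpDr ?ltW // ltr0n.
  apply: (le_trans (_ : _ <= T (r + 1) 1 q n.+1 - 1)).

    rewrite Tsplit [1 + _]addrC addrK; apply: ler_sum => j _; rewrite addn1.
    apply: ler_wpM2r; first by rewrite exprn_ge0 ?ltW.
    by apply: mono => //; [exact: ltW | rewrite ler1n].
  by rewrite lerD2r; apply: key; rewrite ?ltW // ltr_wpDr.
split.
  move=> k k1; apply: eser_le => [j|n].
    by apply: term_ge0; rewrite ?ltW // ?ltr_wpDr ?ltW // ltr0n.
  set X := T (r + 1) (1 + 1) q n.+1.
  have hX : 1 + r / 1 * q * X <= (1 - q) `^ (- r).
    by rewrite /X -TS ?ltr01 //; apply: key; rewrite ?ltW.
  rewrite divr1 in hX.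
  apply: (le_trans (_ : _ <= X - 1)).
    rewrite /X Tsplit [1 + _]addrC addrK; apply: ler_sum => j _; rewrite addn1.
    apply: ler_wpM2r; first by rewrite exprn_ge0 ?ltW.
    have -> : r + k%:R = (r - 1) + k.+1%:R by rewrite -natr1; ring.
    have -> : r + 1 = (r - 1) + (1 + 1) by ring.
    apply: mono; first by rewrite subr_ge0 ltW.
      lra.
    by rewrite -natr1 lerD2r ler1n.
  rewrite lerD2r ler_pdivlMr ?mulr_gt0 //.
  have -> : X * (r * q) = r * q * X by ring.
  lra.
split.
  move=> k k1; apply: eser_le => [j|n].
    by apply: term_ge0; rewrite ?ltW // ?ltr_wpDr ?ltW // ltr0n.
  set X := T (r + 1 + 1) (1 + 1) q n.+1.
  have hX : 1 + (r + 1) / 1 * q * X <= (1 - q) `^ (- (r + 1)).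
    by rewrite /X -TS ?ltr01 //; apply: key; rewrite ?ltW // ltr_wpDr.
  rewrite divr1 in hX.
  have X0 : 0 <= X by apply: T_ge0; rewrite ?ltW //; lra.
  apply: (le_trans (_ : _ <= q * (X - 1))).
    rewrite /X Tsplit [1 + _]addrC addrK mulr_sumr; apply: ler_sum => j _.
    rewrite addn2 /= [q ^+ j.+2]exprS mulrCA; apply: ler_wpM2l; first exact: ltW.
    apply: ler_wpM2r; first by rewrite exprn_ge0 ?ltW.
    rewrite -addrA; apply: mono; first exact: ltW.
      lra.
    by rewrite -natr1 lerD2r ler1n.
  have : q * X <= ((1 - q) `^ (- (r + 1)) - 1) / r.
    rewrite ler_pdivlMr //.
    have -> : q * X * r = (r + 1) * q * X - q * X by ring.
    have : 0 <= q * X by apply: mulr_ge0 (ltW hq0) X0.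
    lra.
  lra.
split.
  move=> k k2; apply: eser_le => [j|n].
    apply: term_ge0; rewrite ?ltW // ?ltr_wpDr ?ltW // ltr0n //.
    exact: leq_trans k2.
  set X := T (r + 1 + 1 + 1) (1 + 1) q n.+1.
  have hX : 1 + (r + 1 + 1) / 1 * q * X <= (1 - q) `^ (- (r + 1 + 1)).
    rewrite /X -TS ?ltr01 //; apply: key; rewrite ?ltW //; lra.
  rewrite divr1 in hX.
  have X0 : 0 <= X by apply: T_ge0; rewrite ?ltW //; lra.
  apply: (le_trans (_ : _ <= X - 1)).
    rewrite /X Tsplit [1 + _]addrC addrK; apply: ler_sum => j _; rewrite addn1.
    apply: ler_wpM2r; first by rewrite exprn_ge0 ?ltW.
    have -> : r + k.+1%:R = (r + 1) + k%:R by rewrite -natr1; ring.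
    have -> : r + 1 + 1 + 1 = (r + 1) + (1 + 1) by ring.
    apply: mono; first by rewrite ltW // ltr_wpDr // ltW.
      lra.
    by rewrite (_ : 1 + 1 = 2%:R) // ler_nat.
  have -> : (r + 2 : R) = r + 1 + 1 by ring.
  rewrite lerD2r ler_pdivlMr ?mulr_gt0 //; last lra.
  have -> : X * ((r + 1) * q) = (r + 1 + 1) * q * X - q * X by ring.
  have : 0 <= q * X by apply: mulr_ge0 (ltW hq0) X0.
  lra.
move=> k k2; apply: eser_le => [j|n].
  have k0' : (0 < k)%N by exact: leq_trans k2.
  by apply: term_ge0; rewrite ?ltW // ?ltr_wpDr ?ltW // ltr0n.
have k0 : (2 : R) <= k%:R by rewrite ler_nat.
set X := T (r + 1 + 1) (1 + 1 + 1) q n.+1.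
set Y := T (r + 1) (1 + 1) q n.+2.
have hY : 1 + r / 1 * q * Y <= (1 - q) `^ (- r).
  by rewrite /Y -TS ?ltr01 //; apply: key; rewrite ?ltW.
have eY : Y = 1 + (r + 1) / (1 + 1) * q * X by rewrite /Y TS //; lra.
rewrite divr1 in hY.
have X0 : 0 <= X by apply: T_ge0; rewrite ?ltW //; lra.
apply: (le_trans (_ : _ <= 2^-1 * (X - 1))).
  rewrite /X Tsplit [1 + _]addrC addrK mulr_sumr; apply: ler_sum => j _.
  rewrite addn1 (rprodS (k%:R : R) j.+1).
  have -> : rprod (r + k%:R) j.+1 / (k%:R * rprod (k%:R + 1) j.+1) * q ^+ j.+1
      = k%:R^-1 * (rprod (r + k%:R) j.+1 / rprod (k%:R + 1) j.+1 * q ^+ j.+1).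
    by rewrite invfM; ring.
  apply: ler_pM.
  - by rewrite invr_ge0.
  - apply: term_ge0; rewrite ?ltW //; lra.
  - by rewrite lef_pV2 ?posrE //; lra.
  apply: ler_wpM2r; first by rewrite exprn_ge0 ?ltW.
  have -> : r + k%:R = (r - 1) + (k%:R + 1) by ring.
  have -> : r + 1 + 1 = (r - 1) + (1 + 1 + 1) by ring.
  apply: mono; first by rewrite subr_ge0 ltW.
    lra.
  lra.
have : 2^-1 * X <= ((1 - q) `^ (- r) - 1) / (r * (r + 1) * q ^+ 2).
  rewrite ler_pdivlMr; last by rewrite !mulr_gt0 ?exprn_gt0 //; lra.
  have -> : 2^-1 * X * (r * (r + 1) * q ^+ 2) = r * q * Y - r * q.
    by rewrite eY; field.
  have : 0 <= r * q by apply: mulr_ge0 (ltW r0) (ltW hq0).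
  lra.
lra.
Qed.
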